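(* Let $N\ge3$ and $G\in\mathcal G_3(N)$. If $s=(x^1,\dots,x^{N-1},u,N)\in S^N\cap S_{nc}$ satisfies $c(G|s)=1$ (and hence has the sure-capture property), then: (1) $|N(u)|=1$, i.e. $u$ is a leaf of $G$; and (2) if $N(u)=\{v\}$, then $c(G|s')=\infty$ for every state $s'=(y^1,\dots,y^{N-1},v,N)\in S^N\cap S_{nc}$.
   Context: Board and moves: $G=(V,E)$ finite, simple, connected, undirected; $N(u)$ is the open neighbourhood of $u$. There are $N\ge3$ tokens, cops $C_1,\dots,C_{N-1}$ (tokens $1,\dots,N-1$) and robber $R$ (token $N$). A state is $s=(x^1,\dots,x^N,n)$ with $x^i\in V$ the position of token $i$ and $n$ the token to move; $S^n$ is the set of states with token $n$ to move; $s$ is a capture state if $x^i=x^N$ for some $i\le N-1$, and $S_{nc}$ is the set of noncapture states. In each turn the token to move moves to a vertex of its closed neighbourhood (may stay put); order $C_1,\dots,C_{N-1},R,C_1,\dots$; the game ends at the first capture. The modified cops-and-robber (CR) game is the two-player zero-sum game where one player controls all cops, the other the robber, and if capture occurs at time $t$ (number of turns) the robber's payoff is $-\gamma^t$ ($0$ if never), $\gamma\in(0,1)$. $\widehat\Sigma^n$ denotes the set of pure positional strategies of token $n$ that are components of optimal strategies in this game (CR-optimal strategies). For $s\in S_{nc}$, whenever CR-optimal play from $s$ leads to capture, it is always the same cop, denoted $\widehat C(s)$, that effects it. State cop number. For $s\in S_{nc}$, $c(G|s)=c_N(G|s)$ is the minimum $k\in\{1,\dots,N-1\}$ for which there exist $k$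 cops and strategies for them such that, starting from $s$, a capture (by any cop) occurs whatever the other $N-k$ tokens (including $R$) do; $c(G|s)=\infty$ if no such $k$ exists. $c(G)$ is the classical cop number of $G$. Graph classes. $\mathcal G(N)=\{G: c(G)>N-1\}$; $\mathcal G_1(N)=\{G\in\mathcal G(N):\exists s\in S_{nc}\text{ with } c(G|s)\in\{2,\dots,N-1\}\}$; $\mathcal G_1'(N)=\mathcal G(N)\setminus\mathcal G_1(N)$; $\mathcal G_2(N)=\{G\in\mathcal G(N): c(G|s)=\infty\text{ for all } s\in S^N\cap S_{nc}\}$; $\mathcal G_2'(N)=\mathcal G_1'(N)\setminus\mathcal G_2(N)$. Say that a state $s\in S_{nc}$ with $c(G|s)=1$ and $\widehat C(s)=C_m$ has the sure-capture property if for every $\widehat\sigma^m\in\widehat\Sigma^m$ and every strategy profile $\sigma^{-m}$ of the other tokens, play from $s$ under $(\widehat\sigma^m,\sigma^{-m})$ ends in a capture in which $C_m$ is on the robber's vertex. $\mathcal G_3(N)$ is the set of $G\in\mathcal G_2'(N)$ in which every $s\in S_{nc}$ with $c(G|s)=1$ has the sure-capture property. *)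

(* Defs.v *)
From HB Require Import structures.
From mathcomp Require Import all_boot all_order all_algebra.
From Stdlib Require Import Classical ClassicalEpsilon.
Set Implicit Arguments. Unset Strict Implicit. Unset Printing Implicit Defensive.
Import Order.TTheory GRing.Theory Num.Theory.

Section CR.
Variable N : nat.          (* number of tokens *)
Variable V : finType.
Variable adj : rel V.

(* tokens 0..N-1 (paper's tokens 1..N); the robber is the last token *)
Definition Tok := 'I_(N.-1).+1.
Definition robber : Tok := ord_max.
Definition is_cop (i : Tok) : bool := i != robber.

(* positions of all tokens, and states = (positions, token to move) *)
Definition Pos := {ffun Tok -> V}.
Definition State := (Pos * Tok)%type.

Definition closedN (x y : V) : bool := (y == x) || adj x y.

Definition nextTok (n : Tok) : Tok := if n == robber then ord0 else inord n.+1.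

Definition is_capture (s : State) : bool :=
  [exists i : Tok, is_cop i && (s.1 i == s.1 robber)].
Definition noncapture (s : State) : bool := ~~ is_capture s.

Definition legal_step (s s' : State) : Prop :=
  [/\ s'.2 = nextTok s.2,
      (forall i, i != s.2 -> s'.1 i = s.1 i) &
      closedN (s.1 s.2) (s'.1 s.2)].

(* pure positional strategies (token n's strategy is used only when n moves) *)
Definition strat := Pos -> V.
Definition valid_strat (n : Tok) (f : strat) : Prop := forall p : Pos, closedN (p n) (f p).
Definition Profile := Tok -> strat.
Definition valid_profile (sg : Profile) : Prop := forall n, valid_strat n (sg n).
Definition mix (sg tau : Profile) (A : pred Tok) : Profile :=
  fun n => if A n then tau n else sg n.

Definition step (sg : Profile) (s : State) : State :=
  ([ffun i => if i == s.2 then sg s.2 s.1 else s.1 i], nextTok s.2).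
Definition play (sg : Profile) (s : State) (t : nat) : State := iter t (step sg) s.

Definition captures (sg : Profile) (s : State) : Prop :=
  exists t, is_capture (play sg s t).
Definition first_capture (sg : Profile) (s : State) (t : nat) : Prop :=
  is_capture (play sg s t) /\ forall t', t' < t -> ~~ is_capture (play sg s t').

Section Payoff.
Variable R : realFieldType.
Variable gamma : R.

(* cops' payoff gamma^t if capture first occurs at time t, 0 if never;
   the robber's payoff is its negative (zero-sum) *)
Definition payoff (sg : Profile) (s : State) : R :=
  match excluded_middle_informative (captures sg s) with
  | left H => gamma ^+ (ex_minn H)
  | right _ => 0
  end.

(* optimal strategies of the two-player zero-sum game (cops team vs robber):
   saddle points, uniformly in the initial state *)
Definition optimal_profile (sg : Profile) : Prop :=
  valid_profile sg /\
  forall (s : State) (tau : Profile), valid_profile tau ->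
    (payoff (mix sg tau is_cop) s <= payoff sg s)%R /\
    (payoff sg s <= payoff (mix sg tau (pred1 robber)) s)%R.

Definition hatSigma (n : Tok) (f : strat) : Prop :=
  exists sg, optimal_profile sg /\ sg n =1 f.

Definition hatC (s : State) (m : Tok) : Prop :=
  is_cop m /\ exists sg, optimal_profile sg /\
    exists t, first_capture sg s t /\ (play sg s t).1 m = (play sg s t).1 robber.

Definition sure_capture (s : State) : Prop :=
  forall m, hatC s m ->
  forall f, hatSigma m f ->
  forall sg, valid_profile sg ->
    let sg' := mix sg (fun _ => f) (pred1 m) in
    exists t, first_capture sg' s t /\ (play sg' s t).1 m = (play sg' s t).1 robber.
End Payoff.

Definition legal_play (f : nat -> State) (s : State) : Prop :=
  f 0 = s /\ forall t, legal_step (f t) (f t.+1).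

Definition force (s : State) (k : nat) : Prop :=
  exists K : {set Tok},
    [/\ K \subset [set i | is_cop i], #|K| = k &
      exists sg : Profile, (forall i, i \in K -> valid_strat i (sg i)) /\
        forall f, legal_play f s ->
          (forall t, (f t).2 \in K -> (f t.+1).1 (f t).2 = sg (f t).2 (f t).1) ->
          exists t, is_capture (f t)].

Definition scn_eq (s : State) (k : nat) : Prop :=
  [/\ 1 <= k <= N.-1, force s k & forall j, 1 <= j < k -> ~ force s j].
Definition scn_inf (s : State) : Prop :=
  forall k, 1 <= k <= N.-1 -> ~ force s k.

(* classical cops and robber with k cops: cops place, robber places, then
   cops (all simultaneously) and robber alternate *)
Definition classical_cops_win (k : nat) : Prop :=
  exists (c0 : {ffun 'I_k -> V}) (sg : {ffun 'I_k -> V} -> V -> {ffun 'I_k -> V}),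
    (forall (c : {ffun 'I_k -> V}) (r : V) (i : 'I_k), closedN (c i) (sg c r i)) /\
    forall (c : nat -> {ffun 'I_k -> V}) (r : nat -> V),
      c 0 = c0 -> (forall t, c t.+1 = sg (c t) (r t)) ->
      (forall t, closedN (r t) (r t.+1)) ->
      exists t (i : 'I_k), c t i = r t \/ c t.+1 i = r t.

Definition in_G : Prop := forall k, k <= N.-1 -> ~ classical_cops_win k.
Definition in_G1 : Prop :=
  in_G /\ exists s, noncapture s /\ exists k, 2 <= k /\ scn_eq s k.
Definition in_G1' : Prop := in_G /\ ~ in_G1.
Definition in_G2 : Prop :=
  in_G /\ forall s : State, s.2 = robber -> noncapture s -> scn_inf s.
Definition in_G2' : Prop := in_G1' /\ ~ in_G2.
Definition in_G3 (R : realFieldType) (gamma : R) : Prop :=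
  in_G2' /\ forall s, noncapture s -> scn_eq s 1 -> sure_capture gamma s.

End CR.

(* Main.v *)
Require Import Defs.
From HB Require Import structures.
From mathcomp Require Import all_boot all_order all_algebra.
From Stdlib Require Import Classical ClassicalEpsilon.
Import Order.TTheory GRing.Theory Num.Theory.
Set Implicit Arguments. Unset Strict Implicit. Unset Printing Implicit Defensive.

Section Gen.
Variables (N : nat) (V : finType) (adj : rel V).
Local Notation State := (State N V).
Local Notation Profile := (Profile N V).
Local Notation Tok := (Tok N).
Local Notation robber := (robber N).
Local Notation closedN := (closedN adj).

Definition mv (s : State) (v : V) : State :=
  ([ffun i => if i == s.2 then v else s.1 i], nextTok s.2).

Lemma stepE (sg : Profile) s : step sg s = mv s (sg s.2 s.1).
Proof. by []. Qed.

Lemma playS (sg : Profile) s t : play sg s t.+1 = play sg (step sg s) t.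
Proof. by rewrite /play iterSr. Qed.

Lemma playS' (sg : Profile) s t : play sg s t.+1 = step sg (play sg s t).
Proof. by rewrite /play iterS. Qed.

Lemma closedNxx x : closedN x x.
Proof. by rewrite /Defs.closedN eqxx. Qed.

Fixpoint cw (n : nat) (s : State) : bool :=
  match n with
  | 0 => is_capture s
  | n'.+1 => is_capture s ||
      (if is_cop s.2 then [exists v, closedN (s.1 s.2) v && cw n' (mv s v)]
       else [forall v, closedN (s.1 s.2) v ==> cw n' (mv s v)])
  end.

Lemma cw_mono n s : cw n s -> cw n.+1 s.
Proof.
elim: n s => [|n IH] s /=; first by move=> ->.
case/orP=> [->//|]; case: ifP => _ H; apply/orP; right.
  case/existsP: H => v /andP[h1 h2]; apply/existsP; exists v; rewrite h1 /=; exact: IH.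
apply/forallP => v; apply/implyP => hv; apply: IH; exact: (implyP (forallP H v)).
Qed.

Lemma cw_le m n s : m <= n -> cw m s -> cw n s.
Proof.
move=> /subnK <-; elim: (n - m) => [//|d IH] h; rewrite addSn; apply: cw_mono; exact: IH.
Qed.

Definition copP (s : State) v := closedN (s.1 s.2) v /\
  forall k, (exists v', closedN (s.1 s.2) v' /\ cw k (mv s v')) -> cw k (mv s v).
Definition robP (s : State) v := closedN (s.1 s.2) v /\
  forall k, cw k (mv s v) -> forall v', closedN (s.1 s.2) v' -> cw k (mv s v').

Lemma ex_copP s : exists v, copP s v.
Proof.
pose P k := [exists v', closedN (s.1 s.2) v' && cw k (mv s v')].
case: (classic (exists k, P k)) => [exP|nex].
  case: (ex_minnP exP) => k0 /existsP[v /andP[hv hc]] hmin.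
  exists v; split => // k [v' [h1 h2]].
  apply: (cw_le (hmin k _) hc); apply/existsP; exists v'; by rewrite h1.
exists (s.1 s.2); split; first exact: closedNxx.
move=> k [v' [h1 h2]]; exfalso; apply: nex; exists k; apply/existsP; exists v'; by rewrite h1.
Qed.

Lemma fin_bound (T : finType) (Q : nat -> T -> bool) :
  (forall k t, Q k t -> Q k.+1 t) -> (forall t, exists k, Q k t) -> exists K, forall t, Q K t.
Proof.
move=> mono ex.
have mono' : forall m n t, m <= n -> Q m t -> Q n t.
  move=> m n t /subnK <-; elim: (n - m) => [//|d IH] h; rewrite addSn; apply: mono; exact: IH.
suff: forall l : seq T, exists K, forall t, t \in l -> Q K t.
  case/(_ (enum T)) => K HK; exists K => t; apply: HK; by rewrite mem_enum.
elim=> [|a l [K HK]]; first by exists 0.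
case: (ex a) => k hk; exists (maxn K k) => t; rewrite inE => /orP[/eqP->|ht].
  apply: mono' hk; exact: leq_maxr.
apply: (mono' K); [exact: leq_maxl| exact: HK].
Qed.

Lemma ex_robP s : exists v, robP s v.
Proof.
pose P k := [forall v', closedN (s.1 s.2) v' ==> cw k (mv s v')].
case: (classic (exists k, P k)) => [exP|nex].
  case: (ex_minnP exP) => k0 hP hmin.
  case: k0 hP hmin => [|k1] hP hmin.
    exists (s.1 s.2); split; first exact: closedNxx.
    move=> k _ v' hv'; apply: (cw_le (leq0n k)); exact: (implyP (forallP hP v')).
  have : ~~ P k1 by apply/negP => /hmin; rewrite ltnn.
  rewrite negb_forall => /existsP[v]; rewrite negb_imply => /andP[hv hnc].
  exists v; split => // k hk v' hv'.
  have hk1 : k1 < k.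
    rewrite ltnNge; apply/negP => hle; move: hnc; by rewrite (cw_le hle hk).
  apply: (cw_le hk1); exact: (implyP (forallP hP v')).
have : exists v, closedN (s.1 s.2) v /\ forall k, ~~ cw k (mv s v).
  apply: NNPP => hn; apply: nex.
  suff [K HK] : exists K, forall t, (fun k v => closedN (s.1 s.2) v ==> cw k (mv s v)) K t.
    by exists K; apply/forallP.
  apply: fin_bound.
    by move=> k t /implyP h; apply/implyP => /h; exact: cw_mono.
  move=> t; case: (boolP (closedN (s.1 s.2) t)) => ht; last first.
    by exists 0.
  apply: NNPP => hn2; apply: hn; exists t; split => // k; apply/negP => hc.
  apply: hn2; by exists k.
case=> v [hv hnc]; exists v; split => // k hk; by rewrite (negbTE (hnc k)) in hk.
Qed.

Definition optsg : Profile := fun n p =>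
  if is_cop n then epsilon (inhabits (p n)) (copP (p, n))
  else epsilon (inhabits (p n)) (robP (p, n)).

Lemma optsg_cop n p : is_cop n -> copP (p, n) (optsg n p).
Proof. move=> h; rewrite /optsg h; apply: epsilon_spec; exact: ex_copP. Qed.
Lemma optsg_rob n p : ~~ is_cop n -> robP (p, n) (optsg n p).
Proof. move=> h; rewrite /optsg (negbTE h); apply: epsilon_spec; exact: ex_robP. Qed.

Lemma optsg_valid : valid_profile adj optsg.
Proof.
move=> n p; case: (boolP (is_cop n)) => h.
  by case: (optsg_cop p h).
by case: (optsg_rob p h).
Qed.

Lemma copside (sg : Profile) : valid_profile adj sg ->
  (forall n, is_cop n -> sg n = optsg n) ->
  forall k s, cw k s -> exists2 t, t <= k & is_capture (play sg s t).
Proof.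
move=> hv hc; elim=> [|k IH] [p n] /=; first by move=> h; exists 0.
case/orP => [h|]; first by exists 0.
move=> H; suff: cw k (step sg (p, n)).
  by case/IH => t ht hcap; exists t.+1 => //; rewrite playS.
rewrite stepE /=; move: H; case: ifP => hn H.
  rewrite (hc n hn); case: (optsg_cop p hn) => _ hh; apply: hh.
  case/existsP: H => v /andP[h1 h2]; by exists v.
exact: (implyP (forallP H _) (hv n p)).
Qed.

Lemma robside (sg : Profile) : valid_profile adj sg ->
  (forall n, ~~ is_cop n -> sg n = optsg n) ->
  forall k s, is_capture (play sg s k) -> cw k s.
Proof.
move=> hv hr; elim=> [|k IH] [p n] //.
rewrite playS => /IH; rewrite stepE /= => H.
apply/orP; right; case: ifP => hn.
  apply/existsP; exists (sg n p); by rewrite hv.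
move/negbT: hn => hn; rewrite (hr n hn) in H.
case: (optsg_rob p hn) => _ hh; apply/forallP => v; apply/implyP; exact: hh.
Qed.

End Gen.
Section Pay.
Local Open Scope ring_scope.
Variables (N : nat) (V : finType) (adj : rel V) (R : realFieldType) (gamma : R).
Hypothesis g0 : (0 <= gamma)%R.
Hypothesis g1 : (gamma <= 1)%R.
Local Notation State := (State N V).
Local Notation Profile := (Profile N V).

Lemma payoff_cases (sg : Profile) s :
  (exists t, [/\ is_capture (play sg s t), (forall t', is_capture (play sg s t') -> (t <= t')%N)
     & payoff gamma sg s = gamma ^+ t]) \/
  ((forall t, ~~ is_capture (play sg s t)) /\ payoff gamma sg s = 0%R).
Proof.
rewrite /payoff; case: excluded_middle_informative => [H|H].
  left; case: (ex_minnP H) => m hm hm'; exists m; split => //.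
right; split => // t; apply/negP => ht; apply: H; by exists t.
Qed.

Lemma payoff_ge0 (sg : Profile) s : (0 <= payoff gamma sg s)%R.
Proof. case: (payoff_cases sg s) => [[t [_ _ ->]]|[_ ->]] //; exact: exprn_ge0. Qed.

Lemma payoff_ge_cap (sg : Profile) s t : is_capture (play sg s t) -> (gamma ^+ t <= payoff gamma sg s)%R.
Proof.
move=> ht; case: (payoff_cases sg s) => [[m [hm hmin ->]]|[hn _]].
  apply: ler_wiXn2l => //; exact: hmin.
by move: (hn t); rewrite ht.
Qed.

Lemma payoff_le_bound (sg : Profile) s T : (forall t, is_capture (play sg s t) -> (T <= t)%N) ->
  (payoff gamma sg s <= gamma ^+ T)%R.
Proof.
move=> hb; case: (payoff_cases sg s) => [[m [hm hmin ->]]|[hn ->]].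
  apply: ler_wiXn2l => //; exact: hb.
exact: exprn_ge0.
Qed.

Lemma sandwich (sgR sgC : Profile) s :
  valid_profile adj sgR -> (forall n, ~~ is_cop n -> sgR n = optsg adj n) ->
  valid_profile adj sgC -> (forall n, is_cop n -> sgC n = optsg adj n) ->
  (payoff gamma sgR s <= payoff gamma sgC s)%R.
Proof.
move=> vR hR vC hC; case: (payoff_cases sgR s) => [[t [ht _ _]]|[_ ->]]; last exact: payoff_ge0.
have exP : exists k, cw adj k s by exists t; exact: robside ht.
case: (ex_minnP exP) => T hT hmin.
apply: (@le_trans _ _ (gamma ^+ T)).
  apply: payoff_le_bound => t' h'; apply: hmin; exact: robside h'.
case: (copside vC hC hT) => t'' ht'' hc.
apply: le_trans (payoff_ge_cap hc); exact: ler_wiXn2l.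
Qed.

Lemma mix_valid (sg tau : Profile) A : valid_profile adj sg -> valid_profile adj tau ->
  valid_profile adj (mix sg tau A).
Proof. move=> h1 h2 n p; rewrite /mix; case: (A n); [exact: h2| exact: h1]. Qed.

Lemma opt_exists : optimal_profile adj gamma (@optsg N V adj).
Proof.
have v := @optsg_valid N V adj.
split => // s tau htau; split.
  apply: sandwich => //; first exact: mix_valid.
  by move=> n hn; rewrite /mix (negbTE hn).
apply: sandwich => //; first exact: mix_valid.
move=> n hn; rewrite /mix /=; suff -> : (n == robber N) = false by [].
apply/negP => /eqP e; by rewrite e /is_cop eqxx in hn.
Qed.
End Pay.
Section WinS.
Variables (N : nat) (V : finType) (adj : rel V).
Local Notation State := (State N V).
Local Notation Profile := (Profile N V).
Local Notation Tok := (Tok N).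
Local Notation robber := (robber N).
Local Notation closedN := (closedN adj).

Lemma legal_mv (s : State) v : closedN (s.1 s.2) v -> legal_step adj s (mv s v).
Proof.
move=> h; split => //=; last by rewrite ffunE eqxx.
by move=> i hi; rewrite ffunE (negbTE hi).
Qed.

Lemma legal_mv_eq (s s' : State) : legal_step adj s s' -> s' = mv s (s'.1 s.2).
Proof.
case: s' => p' n' [/= h1 h2 h3]; rewrite /mv h1; congr pair; apply/ffunP => i.
rewrite ffunE; case: eqP => [->//|/eqP hi]; exact: h2.
Qed.

Inductive Win (k : Tok) (sig : strat N V) : State -> Prop :=
| W0 s : is_capture s -> Win k sig s
| Wk s : ~~ is_capture s -> s.2 = k -> Win k sig (mv s (sig s.1)) -> Win k sig s
| Wo s : ~~ is_capture s -> s.2 <> k -> (forall s', legal_step adj s s' -> Win k sig s') -> Win k sig s.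

Lemma Win_force k sig s : Win k sig s ->
  forall f, legal_play adj f s -> (forall t, (f t).2 = k -> (f t.+1).1 (f t).2 = sig (f t).1) ->
  exists t, is_capture (f t).
Proof.
elim=> {s} [s hc|s hnc hk hW IH|s hnc hk hW IH] f [f0 hl] hcons.
- by exists 0; rewrite f0.
- have e : f 1 = mv s (sig s.1).
    have := legal_mv_eq (hl 0); rewrite f0 => ->; congr mv.
    have := hcons 0; rewrite f0 => -> //.
  case: (IH (fun t => f t.+1)) => [|t ht|t ht]; last by exists t.+1.
    by split => // t; exact: hl.
  exact: hcons.
- have hl0 := hl 0; rewrite f0 in hl0.
  case: (IH _ hl0 (fun t => f t.+1)) => [|t ht|t ht]; last by exists t.+1.
    by split => // t; exact: hl.
  exact: hcons.
Qed.

Lemma force_Win k sig s : valid_strat adj k sig ->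
  (forall f, legal_play adj f s -> (forall t, (f t).2 = k -> (f t.+1).1 (f t).2 = sig (f t).1) ->
    exists t, is_capture (f t)) -> Win k sig s.
Proof.
move=> hv hf; apply: NNPP => hW.
pose g (q : State) : State := if q.2 == k then mv q (sig q.1)
  else epsilon (inhabits q) (fun q' => legal_step adj q q' /\ ~ Win k sig q').
have key : forall q, ~ Win k sig q -> [/\ ~~ is_capture q, legal_step adj q (g q) & ~ Win k sig (g q)].
  move=> q hq.
  have hnc : ~~ is_capture q by apply/negP => hc; apply: hq; exact: W0.
  rewrite /g; case: eqP => hk.
    split => //; first by apply: legal_mv; rewrite hk; exact: hv.
    by move=> hw; apply: hq; exact: Wk.
  have ex : exists q', legal_step adj q q' /\ ~ Win k sig q'.
    apply: NNPP => hn; apply: hq; apply: Wo => // q' hq'; apply: NNPP => hn'.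
    by apply: hn; exists q'.
  by case: (epsilon_spec (inhabits q) _ ex) => h1 h2; split.
pose f t := iter t g s.
have inv : forall t, ~ Win k sig (f t).
  elim=> [//|t IH]; rewrite /f iterS; by case: (key _ IH).
case: (hf f).
- split => // t; rewrite /f iterS; by case: (key _ (inv t)).
- move=> t ht; rewrite /f iterS /g -/(f t) ht eqxx /mv /= ffunE ht eqxx //.
- move=> t hc; by case: (key _ (inv t)); rewrite hc.
Qed.

Lemma force1_Win s : force adj s 1 ->
  exists k sig, [/\ is_cop k, valid_strat adj k sig & Win k sig s].
Proof.
case=> K [hsub hc1 [sg [hv hf]]]; have [k hK] : exists k, K = [set k] by apply/cards1P; rewrite hc1.
have kK : k \in K by rewrite hK set11.
exists k, (sg k); split.
- by move: (subsetP hsub k kK); rewrite inE.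
- exact: hv.
apply: force_Win; first exact: hv.
move=> f hl hc; apply: hf => // t; rewrite hK inE => /eqP e.
by rewrite (hc t e) e.
Qed.

Lemma Win_force1 k sig s : is_cop k -> valid_strat adj k sig -> Win k sig s -> force adj s 1.
Proof.
move=> hk hv hW; exists [set k]; split.
- by rewrite sub1set inE.
- exact: cards1.
exists (fun _ => sig); split; first by move=> i; rewrite inE => /eqP ->.
move=> f hl hc; apply: (Win_force hW hl) => t e; have := hc t; rewrite e inE eqxx; by apply.
Qed.

End WinS.
Section LemE.
Local Open Scope ring_scope.
Variables (N : nat) (V : finType) (adj : rel V) (R : realFieldType) (gamma : R).
Hypothesis hN : (0 < N.-1)%N.
Hypothesis hg : 0 < gamma < 1.
Local Notation State := (State N V).
Local Notation Profile := (Profile N V).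
Local Notation Tok := (Tok N).
Local Notation robber := (robber N).
Local Notation closedN := (closedN adj).

Lemma play_legal (sg : Profile) s : valid_profile adj sg -> legal_play adj (play sg s) s.
Proof.
move=> hv; split => // t; rewrite playS' stepE; apply: legal_mv; exact: hv.
Qed.

Lemma cop_ne_robber (i : Tok) : is_cop i -> (i == robber) = false.
Proof. by move=> h; apply/negbTE. Qed.

Lemma lemmaE : in_G3 N adj gamma -> forall s : State, s.2 = robber -> noncapture s ->
  force adj s 1 -> forall i j : Tok, is_cop i -> is_cop j ->
  adj (s.1 robber) (s.1 i) -> adj (s.1 robber) (s.1 j) -> s.1 i = s.1 j.
Proof.
move=> [_ hG3] s hs hnc hf i1 j1 ci cj ai aj; apply: NNPP => hne.
have hscn : scn_eq adj s 1.
  split => //.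
  by move=> j /andP[h1 h2]; move: (leq_trans h2 h1); rewrite ltnn.
have sc := hG3 s hnc hscn.
case/andP: hg => hg0 hg1.
have g0 := ltW hg0; have g1 := ltW hg1.
have opt := @opt_exists N V adj R gamma g0 g1.
set sg0 := optsg adj in opt.
have [k [sig [ck vk hW]]] := force1_Win hf.
pose tau : Profile := fun n => if n == k then sig else (fun p => p n).
have vt : valid_profile adj tau.
  by move=> n p; rewrite /tau; case: eqP => [->|_]; [exact: vk | exact: closedNxx].
have [t ht] : exists t, is_capture (play (mix sg0 tau (@is_cop N)) s t).
  apply: (Win_force hW (play_legal _ _)).
    apply: mix_valid => //; exact: optsg_valid.
  move=> t e; rewrite playS' stepE /mv /= ffunE eqxx e /mix ck /tau eqxx //.
case: opt => vopt hopt.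
have [hle _] := hopt s tau vt.
have hpos : 0 < payoff gamma sg0 s.
  have h1 := payoff_ge_cap g0 g1 ht.
  apply: lt_le_trans hle; apply: lt_le_trans h1; exact: exprn_gt0.
case: (payoff_cases gamma sg0 s) => [[t0 [hc0 hmin _]]|[_ e0]]; last by rewrite e0 ltxx in hpos.
have hc0' := hc0; case/existsP: hc0' => m /andP[cm /eqP em].
have hC : hatC adj gamma s m.
  split => //; exists sg0; split => //; exists t0; split => //; split => //.
  move=> t' lt; apply/negP => h; move: (hmin t' h); by rewrite leqNgt lt.
have hS : hatSigma adj gamma m (sg0 m) by exists sg0; split.
pose target := if s.1 m == s.1 i1 then s.1 j1 else s.1 i1.
have atgt : adj (s.1 robber) target by rewrite /target; case: ifP.
pose sgA : Profile := fun n => if n == robber then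
   (fun p => if closedN (p robber) target then target else p robber) else (fun p => p n).
have vA : valid_profile adj sgA.
  move=> n p; rewrite /sgA; case: eqP => [->|_]; last exact: closedNxx.
  by case: ifP => // _; exact: closedNxx.
have := sc m hC (sg0 m) hS sgA vA => /= [[t' [[hct' hmin'] hp']]].
set sg' := mix _ _ _ in hct' hmin' hp'.
have p1 : forall c, (play sg' s 1).1 c = if c == robber then target else s.1 c.
  move=> c; rewrite /play /= ffunE hs.
  case: eqP => [_|//]; rewrite /sg' /mix /=.
  rewrite eq_sym cop_ne_robber // /sgA eqxx.
  by rewrite /Defs.closedN atgt orbT.
have cap1 : is_capture (play sg' s 1).
  apply/existsP; exists (if s.1 m == s.1 i1 then j1 else i1).
  rewrite !p1 eqxx /target; case: ifP => _; rewrite ?ci ?cj ?cop_ne_robber ?eqxx //.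
have et : t' = 1%N.
  case: t' hct' hmin' hp' => [|[|t']] hct' hmin' hp' //.
    by move: hnc; rewrite /noncapture -[s]/(play sg' s 0) hct'.
  by move: (hmin' 1%N isT); rewrite cap1.
move: hp'; rewrite et !p1 cop_ne_robber // eqxx /target.
case: ifP => [/eqP e1 e2|/eqP e1 e2]; last by apply: e1.
by apply: hne; rewrite -e1 e2.
Qed.
End LemE.
Section Core.
Variables (N : nat) (V : finType) (adj : rel V) (R : realFieldType) (gamma : R).
Hypothesis hN : 2 < N.
Hypothesis hsym : symmetric adj.
Hypothesis hirr : irreflexive adj.
Hypothesis hg : (0 < gamma < 1)%R.
Hypothesis hG3 : in_G3 N adj gamma.
Local Notation State := (State N V).
Local Notation Profile := (Profile N V).
Local Notation Tok := (Tok N).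
Local Notation robber := (robber N).
Local Notation closedN := (closedN adj).

Definition leafy (u : V) := forall a b, adj u a -> adj u b -> a = b.

Lemma hN1 : (0 < N.-1)%N.
Proof. by case: N hN => [|[|n]]. Qed.

Lemma val_robber : val robber = N.-1.
Proof. by []. Qed.

Lemma val_next (n : Tok) : n != robber -> val (nextTok n) = (val n).+1.
Proof.
move=> hn; rewrite /nextTok (negbTE hn) /= inordK // ltnS.
have := ltn_ord n; rewrite ltnS leq_eqVlt => /orP[/eqP e|//].
by case/negP: hn; apply/eqP; apply: val_inj.
Qed.

Lemma next_robber : nextTok robber = ord0.
Proof. by rewrite /nextTok eqxx. Qed.

Lemma tok_eq_robber (n : Tok) : val n = N.-1 -> n = robber.
Proof. by move=> h; apply: val_inj. Qed.

Lemma robber_neq_cop (n : Tok) : is_cop n -> n != robber.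
Proof. by []. Qed.

Lemma noncop_robber (n : Tok) : ~~ is_cop n -> n = robber.
Proof. by rewrite /is_cop negbK => /eqP. Qed.

Section WithK.
Variables (k : Tok) (sig : strat N V).
Hypothesis ck : is_cop k.
Hypothesis vk : valid_strat adj k sig.

Definition pik : Profile := fun n => if n == k then sig else (fun p => p n).

Lemma pik_valid : valid_profile adj pik.
Proof. by move=> n p; rewrite /pik; case: eqP => [->|_]; [exact: vk| exact: closedNxx]. Qed.

Definition Q (s : State) := forall t, (forall t', t' <= t -> noncapture (play pik s t')) ->
  (play pik s t).2 = robber -> leafy ((play pik s t).1 robber).

Lemma track (s : State) y : s.2 = robber -> forall t, t <= N.-1 ->
  forall q, q = play pik (mv s y) t ->
  [/\ val q.2 = t, (forall c, c != k -> q.1 c = (mv s y).1 c),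
      closedN (s.1 k) (q.1 k) & (t <= val k -> q.1 k = s.1 k)].
Proof.
move=> hs; elim=> [|t IH] ht q0 ->.
  have ek : (mv s y).1 k = s.1 k by rewrite ffunE hs (negbTE (robber_neq_cop ck)).
  change (play pik (mv s y) 0) with (mv s y); split => //.
  - by rewrite /= hs next_robber.
  - by rewrite ek; exact: closedNxx.
case: (IH (ltnW ht) _ erefl) => h1 h2 h3 h4.
set q := play pik (mv s y) t in h1 h2 h3 h4 *.
have hq : q.2 != robber.
  apply/negP => /eqP e; move: h1; rewrite e val_robber => e2; by rewrite e2 ltnn in ht.
rewrite playS' stepE /=; split.
- by rewrite val_next // h1.
- move=> c hc; rewrite ffunE; case: eqP => [e|_]; last exact: h2.
  rewrite -e /pik (negbTE hc); exact: h2.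
- rewrite ffunE; case: eqP => [e|_] //.
  rewrite /pik -e eqxx; have := vk q.1; rewrite h4 //.
  rewrite -h1 e; exact: leqnn.
- move=> hk; rewrite ffunE; case: eqP => [e|_]; last by apply: h4; exact: ltnW.
  by move: hk; rewrite e -/q h1 ltnn.
Qed.

Lemma core_step (s : State) : s.2 = robber -> noncapture s ->
  (forall s', legal_step adj s s' -> Q s') ->
  forall y, closedN (s.1 robber) y ->
  (exists2 c, is_cop c & s.1 c = y) \/ closedN (s.1 k) y \/ leafy y.
Proof.
move=> hs hnc IH y hy.
case: (classic (exists2 c, is_cop c & s.1 c = y)) => [h|hno]; first by left.
right.
have hrk : (robber == k) = false by apply/negbTE; rewrite eq_sym.
have m1 : forall c, (mv s y).1 c = if c == robber then y else s.1 c.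
  by move=> c; rewrite ffunE hs.
case: (classic (exists t, t <= N.-1 /\ is_capture (play pik (mv s y) t))) => [[t [ht hc]]|hnoc].
  left; case: (@track s y hs t ht _ erefl) => h1 h2 h3 h4.
  case/existsP: hc => c /andP[cc /eqP e].
  have er : (play pik (mv s y) t).1 robber = y by rewrite h2 ?m1 ?eqxx // hrk.
  rewrite er in e.
  case: (c =P k) => [ek|/eqP nk].
    by rewrite -e ek.
  rewrite h2 // m1 (negbTE (robber_neq_cop cc)) in e.
  by exfalso; apply: hno; exists c.
right.
have leg : legal_step adj s (mv s y) by apply: legal_mv; rewrite hs.
case: (@track s y hs N.-1 (leqnn N.-1) _ erefl) => h1 h2 h3 h4.
have := IH _ leg N.-1.
have er : (play pik (mv s y) N.-1).1 robber = y by rewrite h2 ?m1 ?eqxx // hrk.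
rewrite er => H; apply: H; last exact: tok_eq_robber.
move=> t' ht'; apply/negP => hc; apply: hnoc; by exists t'.
Qed.

End WithK.
End Core.
Section Star.
Variables (N : nat) (V : finType) (adj : rel V) (R : realFieldType) (gamma : R).
Hypothesis hN : 2 < N.
Hypothesis hsym : symmetric adj.
Hypothesis hirr : irreflexive adj.
Hypothesis hg : (0 < gamma < 1)%R.
Hypothesis hG3 : in_G3 N adj gamma.
Local Notation State := (State N V).
Local Notation Profile := (Profile N V).
Local Notation Tok := (Tok N).
Local Notation robber := (robber N).
Local Notation closedN := (closedN adj).

Lemma cap_intro (q : State) (c : Tok) : is_cop c -> q.1 c = q.1 robber -> is_capture q.
Proof. by move=> cc e; apply/existsP; exists c; rewrite cc e eqxx. Qed.

Lemma cap_elim (q : State) : is_capture q -> exists2 c : Tok, is_cop c & q.1 c = q.1 robber.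
Proof. by case/existsP => c /andP[cc /eqP e]; exists c. Qed.

Lemma adj_neq a b : adj a b -> a != b.
Proof. by apply: contraTneq => ->; rewrite hirr. Qed.

Lemma closedN_adj a b : closedN a b -> b != a -> adj a b.
Proof. by rewrite /Defs.closedN => /orP[/eqP->|//]; rewrite eqxx. Qed.

Lemma star u x w : adj u x -> adj u w -> w != x ->
  (forall y, adj u y -> closedN x y \/ leafy adj y) -> False.
Proof.
move=> aux auw nwx hyp.
have N1 : 1 < N.-1 by case: N hN => [|[|[|n]]].
pose c0 : Tok := ord0.
pose j : Tok := inord 1.
have vj : val j = 1 by rewrite /= inordK // ltnS ltnW.
have c0r : c0 != robber by rewrite -val_eqE /= neq_ltn (ltn_trans _ N1).
have jr : j != robber by rewrite -val_eqE vj /= neq_ltn N1.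
have jc0 : (j == c0) = false by apply/negbTE; rewrite -val_eqE vj.
have cc0 : is_cop c0 by [].
have cj : is_cop j by [].
have axu : adj x u by rewrite hsym.
have xnu : x != u by rewrite eq_sym adj_neq.
have wnu : w != u by rewrite eq_sym adj_neq.
pose pos : Pos N V := [ffun i => if i == robber then u else if i == j then w else x].
pose tau : strat N V := fun p => if closedN (p c0) (p robber) then p robber
   else if closedN (p c0) u then u else p c0.
have vtau : valid_strat adj c0 tau.
  move=> p; rewrite /tau; case: ifP => // _; case: ifP => // _; exact: closedNxx.
have hnc : noncapture (pos, robber).
  apply/negP => /cap_elim [c cc]; rewrite /= !ffunE eqxx (negbTE cc).
  by case: ifP => _ e; [move: wnu | move: xnu]; rewrite e eqxx.
suff hW : Win adj c0 tau (pos, robber).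
  have hf := Win_force1 cc0 vtau hW.
  have := lemmaE (hN1 hN) hg hG3 (s := (pos, robber)) erefl hnc hf cc0 cj.
  rewrite /= !ffunE eqxx (negbTE c0r) (negbTE jr).
  rewrite eqxx eq_sym jc0.
  by move=> /(_ aux auw) e; move: nwx; rewrite e eqxx.
have G : forall y', adj u y' -> leafy adj y' -> forall d (q : State), N.-1 - val q.2 <= d ->
    q.1 c0 = u -> q.1 robber = y' -> 0 < val q.2 -> Win adj c0 tau q.
{ move=> y' auy ly; elim=> [|d IH] q hd qc qr qpos.
  all: case: (boolP (is_capture q)) => hqc; first exact: W0.
  all: case: (q.2 =P robber) => [qrob|/eqP qnr].
  2: { exfalso; move: hd; rewrite leqn0 subn_eq0 leqNgt; case/negP.
        rewrite ltn_neqAle -ltnS ltn_ord andbT; apply: contra qnr => /eqP e.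
        apply/eqP; exact: val_inj. }
  3: { apply: Wo => //; first by move=> e; move: qpos; rewrite e.
       move=> s' hl; rewrite (legal_mv_eq hl); apply: IH.
       - rewrite /= val_next //; move: hd; rewrite subnS; case: (N.-1 - _) => //.
       - rewrite /= ffunE; case: eqP => [e|_] //; by move: qpos; rewrite -e.
       - by rewrite /= ffunE eq_sym (negbTE qnr).
       - by rewrite /= val_next. }
  all: apply: Wo => //; first by move=> e; move: c0r; rewrite -e qrob eqxx.
  all: move=> s' hl; rewrite (legal_mv_eq hl) qrob.
  all: have := hl; case=> _ _; rewrite qrob qr => hy''.
  all: set y'' := s'.1 robber in hy'' *.
  all: have qc' : (mv q y'').1 c0 = u by rewrite ffunE qrob (negbTE c0r).
  all: case: (y'' =P u) => [eu|/eqP nu].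
  1,3: by apply: W0; apply: (cap_intro cc0); rewrite !ffunE qrob eqxx (negbTE c0r) eu qc.
  all: have ey : y'' = y'.
  1,3: by case/orP: hy'' => [/eqP //|a]; move: nu; rewrite (ly _ _ a (_ : adj y' u)) ?eqxx // hsym.
  all: case: (boolP (is_capture (mv q y''))) => hc'; first exact: W0.
  all: apply: Wk => //; first by rewrite /= qrob next_robber.
  all: apply: W0; apply: (cap_intro cc0).
  all: rewrite /= !ffunE /= qrob next_robber eqxx (negbTE c0r) /tau.
  all: rewrite !ffunE !eqxx (negbTE c0r) qc ey /Defs.closedN auy orbT //.
  all: by case: ifP. }
apply: Wo => //; first by move=> e; move: c0r; rewrite -e eqxx.
move=> s1 hl; rewrite (legal_mv_eq hl).
have := hl; case=> _ _; rewrite /= ffunE eqxx => hy'.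
set y' := s1.1 robber in hy' *.
case: (boolP (is_capture (mv (pos, robber) y'))) => hc1; first exact: W0.
have p1 : forall c, (mv (pos, robber) y').1 c = if c == robber then y' else pos c.
  by move=> c; rewrite ffunE.
apply: Wk => //; first by rewrite /= next_robber.
set s2 := mv _ _.
have t1 : tau (mv (pos, robber) y').1 = if closedN x y' then y' else u.
  rewrite /tau !p1 eqxx (negbTE c0r) /pos ffunE (negbTE c0r) eq_sym jc0.
  by case: ifP => // _; rewrite /Defs.closedN axu orbT.
have [hxy|hxy] := boolP (closedN x y'); rewrite ?hxy ?(negbTE hxy) in t1.
  apply: W0; apply: (cap_intro cc0); rewrite /s2 !ffunE /= next_robber eqxx (negbTE c0r) t1.
  by rewrite (_ : (c0 == ord0) = true) //; case: ifP.
have ynu : y' != u by apply/eqP => e; move: hxy; rewrite e /Defs.closedN axu orbT.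
have auy : adj u y' by apply: closedN_adj.
have ly : leafy adj y' by case: (hyp _ auy) => // h; rewrite h in hxy.
apply: (G y' auy ly (N.-1)).
- exact: leq_subr.
- by rewrite /s2 /= ffunE /= next_robber eqxx t1.
- by rewrite /s2 /= ffunE /= next_robber eq_sym (negbTE c0r) p1 eqxx.
- by rewrite /s2 /= next_robber val_next //.
Qed.
End Star.
Section Final.
Variables (N : nat) (V : finType) (adj : rel V) (R : realFieldType) (gamma : R).
Hypothesis hN : 2 < N.
Hypothesis hsym : symmetric adj.
Hypothesis hirr : irreflexive adj.
Hypothesis hg : (0 < gamma < 1)%R.
Hypothesis hG3 : in_G3 N adj gamma.
Local Notation State := (State N V).
Local Notation Tok := (Tok N).
Local Notation robber := (robber N).
Local Notation closedN := (closedN adj).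

Lemma Win_Q k sig : is_cop k -> valid_strat adj k sig -> forall s, Win adj k sig s -> @Q N V adj k sig s.
Proof.
move=> ck vk s hW; elim: hW => {s}.
- move=> s hc t hn _; by move: (hn 0 (leq0n t)); rewrite /noncapture /= hc.
- move=> s hnc hk hW IH [|t] hn hr.
    change (play (pik k sig) s 0) with s in hr; by move: ck; rewrite -hk hr /is_cop eqxx.
  move: hn hr; rewrite /Q playS stepE /pik hk eqxx => hn hr.
  apply: IH hr => t' ht'; move: (hn t'.+1 ht'); by rewrite playS stepE /pik hk eqxx.
- move=> s hnc hk hW IH [|t] hn hr; last first.
    have e : pik k sig s.2 s.1 = s.1 s.2 by rewrite /pik; case: eqP.
    move: hn hr; rewrite playS stepE e => hn hr.
    apply: (IH _ (legal_mv (closedNxx _ _)) t _ hr) => t' ht'.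
    by move: (hn t'.+1 ht'); rewrite playS stepE e.
  change (play (pik k sig) s 0) with s in hr; change (leafy adj (s.1 robber)).
  have hnc' : noncapture s by [].
  have hC := core_step ck vk hr hnc' IH.
  set u := s.1 robber; set x := s.1 k.
  have xu : x != u.
    apply/eqP => e; move/negP: hnc; apply; exact: (cap_intro ck).
  case: (hC u (closedNxx _ _)) => [[c cc e]|[hxu|//]].
    by exfalso; move/negP: hnc; apply; exact: (cap_intro cc).
  have axu : adj x u by apply: (closedN_adj hxu); rewrite eq_sym.
  have aux : adj u x by rewrite hsym.
  have hf : force adj s 1 by apply: (Win_force1 ck vk); exact: Wo.
  have E := lemmaE (hN1 hN) hg hG3 hr hnc' hf.
  have H : forall y, adj u y -> closedN x y \/ leafy adj y.
    move=> y hy; case: (hC y); first by rewrite /Defs.closedN hy orbT.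
      case=> c cc e; left; rewrite -e (E c k cc ck) ?e //; exact: closedNxx.
    by case=> h; [left|right].
  move=> a b ha hb; apply: NNPP => hab.
  pose w := if a == x then b else a.
  apply: (star hN hsym hirr hg hG3 (u := u) (x := x) (w := w) aux) => //.
    by rewrite /w; case: ifP.
  rewrite /w; case: ifP => [/eqP ea|/negbT //]; apply/eqP => eb; apply: hab; by rewrite ea eb.
Qed.

Lemma leaf_of_force (s : State) : s.2 = robber -> noncapture s -> force adj s 1 ->
  leafy adj (s.1 robber).
Proof.
move=> hr hnc hf; have [k [sig [ck vk hW]]] := force1_Win hf.
apply: (Win_Q ck vk hW (t := 0)) => //.
by move=> t'; rewrite leqn0 => /eqP ->.
Qed.

Lemma minforce (s : State) : forall n k, k <= n -> force adj s k -> 1 <= k ->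
  exists k0, [/\ 1 <= k0, k0 <= k, force adj s k0 & forall j, 1 <= j < k0 -> ~ force adj s j].
Proof.
elim=> [|n IH] k hkn hf hk; first by move: hkn; rewrite leqn0 => /eqP e; rewrite e in hk.
case: (classic (exists j, 1 <= j < k /\ force adj s j)) => [[j [/andP[hj1 hj2] hfj]]|hno].
  have hjn : j <= n by rewrite -ltnS (leq_trans hj2 hkn).
  have [k0 [h1 h2 h3 h4]] := IH j hjn hfj hj1.
  by exists k0; split => //; exact: leq_trans (ltnW hj2).
exists k; split => // j hj hfj; apply: hno; by exists j.
Qed.

End Final.

Lemma cops_win_edge (V : finType) (adj : rel V) u v : symmetric adj -> adj u v ->
  (forall z, z = u \/ z = v) -> classical_cops_win adj 1.
Proof.
move=> hsym huv hall.
have cl : forall a b, closedN adj a b.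
  move=> a b; rewrite /Defs.closedN.
  case: (hall a) => ->; case: (hall b) => ->; rewrite ?eqxx //= ?huv ?orbT //.
  by rewrite hsym huv orbT.
exists [ffun _ => u], (fun c r => [ffun _ => r]); split.
  by move=> c r i; rewrite ffunE.
move=> c r c0 cS _; exists 0, ord0; right; by rewrite cS ffunE.
Qed.

Theorem mainTheorem14 (N : nat) (V : finType) (adj : rel V)
    (R : realFieldType) (gamma : R) :
  3 <= N ->
  symmetric adj -> irreflexive adj -> (forall x y, connect adj x y) ->
  (0 < gamma < 1)%R ->
  in_G3 N adj gamma ->
  forall (p : Pos N V) (u : V),
    p (robber N) = u ->
    noncapture (p, robber N) ->
    scn_eq adj (p, robber N) 1 ->
    #|[set v | adj u v]| = 1 /\
    (forall v : V, [set w | adj u w] = [set v] ->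
       forall p' : Pos N V, p' (robber N) = v ->
         noncapture (p', robber N) -> scn_inf adj (p', robber N)).
Proof.
move=> hN hsym hirr hconn hg hG3 p u hpu hnc hscn.
have hf : force adj (p, robber N) 1 by case: hscn.
have lu : leafy adj u by rewrite -hpu; exact: (@leaf_of_force N V adj R gamma hN hsym hirr hg hG3 (p, robber N) erefl hnc hf).
have c0r : (ord0 : Tok N) != robber N.
  by rewrite -val_eqE /= neq_ltn; move: hN; case: (N) => [|[|n]].
split.
  have xu : p ord0 != u.
    apply/eqP => e; move/negP: hnc; apply; apply: (@cap_intro N V (p, robber N) ord0) => //.
    by rewrite /= e hpu.
  case/connectP: (hconn u (p ord0)) => [[|a l] /= hp hl]; first by rewrite hl eqxx in xu.
  case/andP: hp => ha _.
  have -> : [set v | adj u v] = [set a].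
    apply/setP => z; rewrite !inE; apply/idP/idP => [h|/eqP ->//].
    apply/eqP; exact: lu _ _ h ha.
  exact: cards1.
move=> v hv p' hp' hnc' k /andP[hk1 hk2] hfk.
have huv : adj u v.
  have : v \in [set w | adj u w] by rewrite hv set11.
  by rewrite inE.
have [k0 [h1 h2 h3 h4]] := minforce (leqnn k) hfk hk1.
have [[[hG hnG1] _] _] := hG3.
case: k0 h1 h2 h3 h4 => [//|[|k1]] h1 h2 h3 h4; last first.
  apply: hnG1; split => //; exists (p', robber N); split => //; exists k1.+2; split => //.
  split => //; apply/andP; split => //; exact: leq_trans hk2.
have lv : leafy adj v by rewrite -hp'; exact: (@leaf_of_force N V adj R gamma hN hsym hirr hg hG3 (p', robber N) erefl hnc' h3).
have hall : forall z, z = u \/ z = v.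
  move=> z; case/connectP: (hconn u z) => l hp ->.
  suff H : forall l a, (a = u \/ a = v) -> path adj a l -> (last a l = u \/ last a l = v).
    by apply: H hp; left.
  elim=> [|b l' IH] a ha //=.
  case/andP => hab hpl; apply: IH hpl.
  case: ha => ea; rewrite ea in hab.
  - right; have : b \in [set w | adj u w] by rewrite inE.
    by rewrite hv inE => /eqP.
  - left; apply: (lv _ _ hab); by rewrite hsym.
apply: (hG 1); first by move: hN; case: (N) => [|[|n]].
exact: cops_win_edge hsym huv hall.
Qed.
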